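(* Let $({\cal A},{\cal A}_0)$ be a locally convex quasi *-algebra with identity and topology $\tau$, let $\omega_0$ be a positive linear functional on ${\cal A}_0$ with $\omega_0(a^*a)\le p(a)^2$ for all $a\in{\cal A}_0$ for some $\tau$-continuous seminorm $p$, let $\omega=\tilde\omega_0$ be its continuous extension to ${\cal A}$ and $\pi_\omega$ its GNS representation. Then $\pi_\omega({\cal A})'_w=\pi_\omega({\cal A}_0)'_w$.
   Context: A locally convex quasi *-algebra $({\cal A},{\cal A}_0)$: ${\cal A}_0$ is a *-algebra with a locally convex topology $\tau$ making the involution and the multiplications $a\mapsto ab$, $a\mapsto ba$ ($b\in{\cal A}_0$) continuous, ${\cal A}$ is the $\tau$-completion with involution and products $ax,xa$ ($a\in{\cal A},x\in{\cal A}_0$) extended by continuity. GNS construction of $\omega$: Hilbert space ${\cal H}_\omega$, linear $\lambda_\omega:{\cal A}\to{\cal H}_\omega$ with ${\cal D}:=\lambda_\omega({\cal A}_0)$ dense and $\langle\lambda_\omega(x),\lambda_\omega(a)\rangle=\omega(a^*x)$, and $\pi_\omega(x)$, $x\in{\cal A}$, the operator on ${\cal D}$ given by $\pi_\omega(x)\lambda_\omega(a)=\lambda_\omega(xa)$, with $\pi_\omega(x)^\dagger:=\pi_\omega(x)^*\upharpoonright{\cal D}=\pi_\omega(x^* )$. For a *-invariant set ${\mathfrak M}$ of operators with domain ${\cal D}$, the weak commutant is ${\mathfrak M}'_w=\{C\in{\cal B}({\cal H}_\omega):\langle X\xi,C^*\eta\rangle=\langle C\xi,X^\dagger\eta\rangle\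 \forall X\in{\mathfrak M},\ \xi,\eta\in{\cal D}\}$. *)

(* Defs.v *)
From mathcomp Require Import all_boot all_order all_algebra.
From mathcomp Require Import reals complex.
Set Implicit Arguments. Unset Strict Implicit. Unset Printing Implicit Defensive.
Import Order.TTheory GRing.Theory Num.Theory.
Local Open Scope ring_scope.

Section LCQSA.
Context {R : realType}.
Local Notation C := (R[i]).

Definition clinear (V W : lmodType C) (f : V -> W) :=
  forall (k : C) (x y : V), f (k *: x + y) = k *: f x + f y.

Definition cfunctional (V : lmodType C) (f : V -> C) :=
  forall (k : C) (x y : V), f (k *: x + y) = k * f x + f y.

(** ** Seminorms (real-valued, the reals being embedded in C) *)
Definition seminorm (V : lmodType C) (p : V -> C) :=
  [/\ forall x, 0 <= p x,
      forall x y, p (x + y) <= p x + p y &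
      forall (k : C) x, p (k *: x) = `|k| * p x].

(** ** The locally convex topology generated by a family of seminorms
    [q : I -> V -> C]. *)
Definition sn_ball (V : lmodType C) (I : Type) (q : I -> V -> C)
    (n : nat) (f : 'I_n -> I) (d : C) (x y : V) :=
  forall k : 'I_n, q (f k) (y - x) < d.

Definition sn_continuous (V W : lmodType C) (I J : Type)
    (qV : I -> V -> C) (qW : J -> W -> C) (g : V -> W) :=
  forall (x : V) (i : J) (e : C), 0 < e ->
    exists n (f : 'I_n -> I) (d : C), 0 < d /\
      forall y, sn_ball qV f d x y -> qW i (g y - g x) < e.

Definition sn_continuous_C (V : lmodType C) (I : Type)
    (qV : I -> V -> C) (g : V -> C) :=
  forall (x : V) (e : C), 0 < e ->
    exists n (f : 'I_n -> I) (d : C), 0 < d /\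
      forall y, sn_ball qV f d x y -> `|g y - g x| < e.

Definition sn_separated (V : lmodType C) (I : Type) (q : I -> V -> C) :=
  forall x : V, (forall i, q i x = 0) -> x = 0.

Definition sn_dense (V0 V : lmodType C) (I : Type) (q : I -> V -> C)
    (j : V0 -> V) :=
  forall (x : V) n (f : 'I_n -> I) (e : C), 0 < e ->
    exists a : V0, sn_ball q f e x (j a).

Definition sn_complete (V : lmodType C) (I : Type) (q : I -> V -> C) :=
  forall (D : Type) (le : D -> D -> Prop),
    inhabited D ->
    (forall a, le a a) ->
    (forall a b c, le a b -> le b c -> le a c) ->
    (forall a b, exists c, le a c /\ le b c) ->
    forall u : D -> V,
      (forall i (e : C), 0 < e -> exists d0, forall d1 d2,
          le d0 d1 -> le d0 d2 -> q i (u d1 - u d2) < e) ->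
      exists y : V, forall i (e : C), 0 < e -> exists d0, forall d,
          le d0 d -> q i (u d - y) < e.

(** ** Locally convex quasi *-algebras with identity.
   [A0] is a unital *-algebra (involution [inv0]) with the locally convex
   topology tau generated by the seminorms [q]; [A] is its completion:
   a complete Hausdorff locally convex space with seminorms [qA], into
   which [A0] embeds (via [j]) isometrically for every seminorm and densely;
   [invA], [lm] ( [lm x b] = x b ) and [rm] ( [rm b x] = b x ),
   for x in A, b in A0, are the extensions by continuity of the
   involution and of the multiplications. *)
Record lc_quasi_star_algebra (A0 : algType C) (inv0 : A0 -> A0)
    (I : Type) (q : I -> A0 -> C) (A : lmodType C) (j : A0 -> A)
    (qA : I -> A -> C) (invA : A -> A) (lm : A -> A0 -> A)
    (rm : A0 -> A -> A) : Prop := {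
  inv0_invol : forall a, inv0 (inv0 a) = a;
  inv0_add : forall a b, inv0 (a + b) = inv0 a + inv0 b;
  inv0_antilin : forall (k : C) a, inv0 (k *: a) = k^* *: inv0 a;
  inv0_mul : forall a b, inv0 (a * b) = inv0 b * inv0 a;
  q_seminorm : forall i, seminorm (q i);
  inv0_cont : sn_continuous q q inv0;
  mulr_cont : forall b : A0, sn_continuous q q (fun a => a * b);
  mull_cont : forall b : A0, sn_continuous q q (fun a => b * a);
  qA_seminorm : forall i, seminorm (qA i);
  j_lin : clinear j;
  j_inj : injective j;
  qA_j : forall i a, qA i (j a) = q i a;
  A_separated : sn_separated qA;
  A_complete : sn_complete qA;
  A0_dense : sn_dense qA j;
  invA_cont : sn_continuous qA qA invA;
  invA_j : forall a, invA (j a) = j (inv0 a);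
  lm_cont : forall b : A0, sn_continuous qA qA (fun x => lm x b);
  lm_j : forall a b, lm (j a) b = j (a * b);
  rm_cont : forall b : A0, sn_continuous qA qA (fun x => rm b x);
  rm_j : forall a b, rm b (j a) = j (b * a)
}.

(** ** Complex Hilbert spaces (inner product linear in the first slot) *)
Definition hnorm (H : lmodType C) (ip : H -> H -> C) (x : H) : C :=
  sqrtC (ip x x).

Definition hilbert_space (H : lmodType C) (ip : H -> H -> C) :=
  [/\ forall (k : C) (x y z : H), ip (k *: x + y) z = k * ip x z + ip y z,
      forall x y, ip y x = (ip x y)^*,
      forall x, 0 <= ip x x,
      forall x, ip x x = 0 -> x = 0 &
      forall u : nat -> H,
        (forall e : C, 0 < e -> exists N, forall m n, (N <= m)%N -> (N <= n)%N ->
            hnorm ip (u m - u n) < e) ->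
        exists h, forall e : C, 0 < e -> exists N, forall n, (N <= n)%N ->
            hnorm ip (u n - h) < e].

Definition bounded_op (H : lmodType C) (ip : H -> H -> C) (T : H -> H) :=
  clinear T /\ exists M : C, forall x, hnorm ip (T x) <= M * hnorm ip x.

Definition is_adjoint (H : lmodType C) (ip : H -> H -> C) (T Ts : H -> H) :=
  forall x y, ip (T x) y = ip x (Ts y).

Definition dense_in (H : lmodType C) (ip : H -> H -> C) (X : Type)
    (g : X -> H) :=
  forall (h : H) (e : C), 0 < e -> exists x, hnorm ip (h - g x) < e.

(** With the GNS data ([lam] = lambda_omega, D = lam (j A0)),
   [pi x] acts on D by [pi x (lam (j a)) = lam (lm x a)] and
   [pi x]^dagger = [pi (invA x)].  So C belongs to the weak commutant iff
   C is in B(H) and, C^* denoting its adjoint,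
   <pi(x) xi, C^* eta> = <C xi, pi(x)^dagger eta> for all x in S and
   xi = lam (j a), eta = lam (j b) in D. *)
Definition pi_weak_commutant (A0 : algType C) (A : lmodType C)
    (H : lmodType C) (ip : H -> H -> C) (j : A0 -> A) (lam : A -> H)
    (invA : A -> A) (lm : A -> A0 -> A) (S : A -> Prop) (T : H -> H) :=
  bounded_op ip T /\
  exists Ts : H -> H, is_adjoint ip T Ts /\
    forall x, S x -> forall a b : A0,
      ip (lam (lm x a)) (Ts (lam (j b))) = ip (T (lam (j a))) (lam (lm (invA x) b)).

End LCQSA.

(* Main.v *)
Require Import Defs.
From mathcomp Require Import all_boot all_order all_algebra.
From mathcomp Require Import reals complex.
From mathcomp Require Import ring.
Import Order.TTheory GRing.Theory Num.Theory.
Local Open Scope ring_scope.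
Set Implicit Arguments. Unset Strict Implicit.

Section Hil.
Variable R : realType.
Local Notation C := (R[i]).
Variables (H : lmodType C) (ip : H -> H -> C).
Hypothesis HH : hilbert_space ip.

Lemma ip0l z : ip 0 z = 0.
Proof.
case: HH => Hl _ _ _ _.
have := Hl 1 0 0 z; rewrite scale1r addr0 mul1r => E.
by apply: (@addrI _ (ip 0 z)); rewrite addr0 -E.
Qed.

Lemma ipDl x y z : ip (x + y) z = ip x z + ip y z.
Proof. by case: HH => Hl _ _ _ _; rewrite -[x]scale1r Hl mul1r scale1r. Qed.

Lemma ipZl k x z : ip (k *: x) z = k * ip x z.
Proof. by case: HH => Hl _ _ _ _; rewrite -[k *: x]addr0 Hl ip0l addr0. Qed.

Lemma ipC x y : ip y x = (ip x y)^*.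
Proof. by case: HH. Qed.

Lemma ipNl x z : ip (- x) z = - ip x z.
Proof. by rewrite -scaleN1r ipZl mulN1r. Qed.

Lemma ipBl x y z : ip (x - y) z = ip x z - ip y z.
Proof. by rewrite ipDl ipNl. Qed.

Lemma ipDr x y z : ip z (x + y) = ip z x + ip z y.
Proof. by rewrite ipC ipDl rmorphD (ipC z x) (ipC z y) /= !conjCK. Qed.

Lemma ipZr k x z : ip z (k *: x) = k^* * ip z x.
Proof. by rewrite ipC ipZl rmorphM (ipC z x) /= conjCK. Qed.

Lemma ipBr x y z : ip z (x - y) = ip z x - ip z y.
Proof. by rewrite ipC ipBl rmorphB (ipC z x) (ipC z y) /= !conjCK. Qed.

Lemma ip_ge0 x : 0 <= ip x x.
Proof. by case: HH. Qed.

Lemma ip_real x : (ip x x)^* = ip x x.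
Proof. by apply: conj_Creal; apply: ger0_real; apply: ip_ge0. Qed.

Lemma ip_am x y (t : C) : 0 <= t ->
  2 * t * `|ip x y| <= ip x x + t ^+ 2 * ip y y.
Proof.
move=> t0.
have [z0|zn0] := eqVneq (ip x y) 0.
  rewrite z0 normr0 mulr0 addr_ge0 ?ip_ge0 //.
  by rewrite mulr_ge0 ?ip_ge0 ?exprn_ge0.
set z := ip x y.
set n := `|z|.
have n0 : n != 0 by rewrite normr_eq0.
have nr : n^* = n by apply: conj_Creal; apply: normr_real.
have tr : t^* = t by apply: conj_Creal; apply: ger0_real.
have zc : z^* = n ^+ 2 / z by rewrite normCK [z * _]mulrC mulfK.
set c := t * z / n.
have := ip_ge0 (x - c *: y).
rewrite ipBl !ipBr !ipZl !ipZr -/z (ipC x y) -/z.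
rewrite /c !rmorphM /= fmorphV /= nr tr zc.
have -> : ip x x - t * (n ^+ 2 / z) / n * z -
  (t * z / n * (n ^+ 2 / z) - t * z / n * (t * (n ^+ 2 / z) / n * ip y y)) =
    (ip x x + t^+2 * ip y y) - 2 * t * n.
  by field; rewrite zn0 n0.
by rewrite subr_ge0.
Qed.
End Hil.

Section Nb.
Variable R : realType.
Local Notation C := (R[i]).

Definition nb (V : lmodType C) (I : Type) (q : I -> V -> C) (x : V) (P : V -> Prop) :=
  exists n (f : 'I_n -> I) (d : C), 0 < d /\ forall y, sn_ball q f d x y -> P y.

Variables (V : lmodType C) (I : Type) (q : I -> V -> C).

Lemma nb_mono x (P Q : V -> Prop) : (forall y, P y -> Q y) -> nb q x P -> nb q x Q.
Proof. by move=> PQ [n [f [d [d0 Hd]]]]; exists n, f, d; split=> // y /Hd /PQ. Qed.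

Lemma nb_and x (P Q : V -> Prop) : nb q x P -> nb q x Q -> nb q x (fun y => P y /\ Q y).
Proof.
move=> [n1 [f1 [d1 [d10 H1]]]] [n2 [f2 [d2 [d20 H2]]]].
pose f (k : 'I_(n1 + n2)) := match split k with inl a => f1 a | inr b => f2 b end.
have r1 : d1 \is Num.real by apply: gtr0_real.
have r2 : d2 \is Num.real by apply: gtr0_real.
have key : forall d, d <= d1 -> d <= d2 -> 0 < d -> nb q x (fun y => P y /\ Q y).
  move=> d dd1 dd2 d0; exists (n1 + n2)%N, f, d; split=> // y Hy; split.
    apply: H1 => k; have := Hy (lshift n2 k); rewrite /f.
    have -> : split (lshift n2 k) = inl k by apply: (@unsplitK n1 n2 (inl k)).
    by move=> h; apply: lt_le_trans h dd1.
  apply: H2 => k; have := Hy (rshift n1 k); rewrite /f.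
  have -> : split (rshift n1 k) = inr k by apply: (@unsplitK n1 n2 (inr k)).
  by move=> h; apply: lt_le_trans h dd2.
case: (real_leP r1 r2) => h.
  by apply: (key d1).
by apply: (key d2) => //; apply: ltW.
Qed.

Lemma nb_forall x m (P : 'I_m -> V -> Prop) :
  (forall k, nb q x (P k)) -> nb q x (fun y => forall k, P k y).
Proof.
elim: m P => [|m IH] P HP.
  have f0 : 'I_0 -> I by case.
  by exists 0%N, f0, 1; split=> // y _ [].
have := nb_and (HP ord0) (IH (fun k => P (lift ord0 k)) (fun k => HP _)).
apply: nb_mono => y [h0 h1] k.
by case: (unliftP ord0 k) => [k'|] ->.
Qed.

End Nb.

Section Comp.
Variable R : realType.
Local Notation C := (R[i]).

Lemma comp_cont (U V W : lmodType C) (I J K : Type) (qU : I -> U -> C)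
   (qV : J -> V -> C) (qW : K -> W -> C) (g : U -> V) (h : V -> W) :
   sn_continuous qU qV g -> sn_continuous qV qW h -> sn_continuous qU qW (fun x => h (g x)).
Proof.
move=> cg ch x i e e0.
have [n [f [d [d0 Hd]]]] := ch (g x) i e e0.
have : nb qU x (fun y => forall k : 'I_n, qV (f k) (g y - g x) < d).
  by apply: nb_forall => k; apply: cg.
by apply: nb_mono => y hy; apply: Hd.
Qed.

Lemma comp_contC (U V : lmodType C) (I J : Type) (qU : I -> U -> C)
   (qV : J -> V -> C) (g : U -> V) (h : V -> C) :
   sn_continuous qU qV g -> sn_continuous_C qV h -> sn_continuous_C qU (fun x => h (g x)).
Proof.
move=> cg ch x e e0.
have [n [f [d [d0 Hd]]]] := ch (g x) e e0.
have : nb qU x (fun y => forall k : 'I_n, qV (f k) (g y - g x) < d).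
  by apply: nb_forall => k; apply: cg.
by apply: nb_mono => y hy; apply: Hd.
Qed.
End Comp.

Section Gen.
Variable R : realType.
Local Notation C := (R[i]).

Lemma clin0 (V W : lmodType C) (f : V -> W) : clinear f -> f 0 = 0.
Proof.
move=> hf; have := hf 1 0 0; rewrite scale1r addr0 scale1r => E.
by apply: (@addrI _ (f 0)); rewrite addr0 -E.
Qed.

Lemma clinB (V W : lmodType C) (f : V -> W) : clinear f -> forall x y, f (x - y) = f x - f y.
Proof.
move=> hf x y; have := hf (-1) y x; rewrite !scaleN1r => E.
by rewrite addrC E addrC.
Qed.

Lemma cfun0 (V : lmodType C) (f : V -> C) : cfunctional f -> f 0 = 0.
Proof.
move=> hf; have := hf 1 0 0; rewrite scale1r addr0 mul1r => E.
by apply: (@addrI _ (f 0)); rewrite addr0 -E.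
Qed.

Lemma sn0 (V : lmodType C) (p : V -> C) : seminorm p -> p 0 = 0.
Proof. by case=> _ _ hs; rewrite -(scale0r (0 : V)) hs normr0 mul0r. Qed.

Lemma snN (V : lmodType C) (p : V -> C) : seminorm p -> forall x, p (- x) = p x.
Proof. by case=> _ _ hs x; rewrite -scaleN1r hs normrN normr1 mul1r. Qed.

Lemma arithL (N P W x1 x2 x3 : C) : 0 <= N -> P <= 1 -> W <= 1 ->
  N <= 1 + x1 + x2 + x3 -> 2 * 2 * x1 <= N + 2 ^+ 2 * P ->
  2 * 1 * x2 <= P + 1 ^+ 2 * W -> 2 * 2 * x3 <= N + 2 ^+ 2 * W -> N <= 8.
Proof.
move=> N0 P1 W1 hN h1 h2 h3.
have e1 : 4 * N <= 4 + 2 * 2 * x1 + 2 * (2 * 1 * x2) + 2 * 2 * x3.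
  have -> : 4 + 2 * 2 * x1 + 2 * (2 * 1 * x2) + 2 * 2 * x3 = 4 * (1 + x1 + x2 + x3) by ring.
  by rewrite ler_wpM2l.
have e2 : 4 + 2 * 2 * x1 + 2 * (2 * 1 * x2) + 2 * 2 * x3 <=
   4 + (N + 2 ^+ 2 * P) + 2 * (P + 1 ^+ 2 * W) + (N + 2 ^+ 2 * W).
  apply: lerD => //; apply: lerD; [apply: lerD => // | by apply: ler_wpM2l].
have e3 : 4 + (N + 2 ^+ 2 * P) + 2 * (P + 1 ^+ 2 * W) + (N + 2 ^+ 2 * W) =
   2 * N + (4 + 6 * P + 6 * W) by ring.
have e4 : 4 + 6 * P + 6 * W <= 16.
  rewrite [X in _ <= X](_ : _ = 4 + 6 * 1 + 6 * 1); last by ring.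
  by apply: lerD; [apply: lerD => //; apply: ler_wpM2l | apply: ler_wpM2l].
have e5 : 2 * N + 2 * N <= 2 * N + 16.
  have -> : 2 * N + 2 * N = 4 * N by ring.
  by apply: (le_trans e1); apply: (le_trans e2); rewrite e3 lerD2l.
rewrite lerD2l in e5.
rewrite [X in _ <= X](_ : _ = 2 * 8) in e5; last by ring.
by rewrite ler_pM2l in e5.
Qed.

End Gen.

Section Main.
Variable R : realType.
Local Notation C := (R[i]).
Variables (A0 : algType R[i]) (inv0 : A0 -> A0) (I : Type) (q : I -> A0 -> R[i])
  (A : lmodType R[i]) (j : A0 -> A) (qA : I -> A -> R[i])
  (invA : A -> A) (lm : A -> A0 -> A) (rm : A0 -> A -> A).
Hypothesis HA : lc_quasi_star_algebra inv0 q j qA invA lm rm.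
Variables (om0 : A0 -> R[i]) (p : A0 -> R[i]).
Hypotheses (Hp_sn : seminorm p) (Hp_cont : sn_continuous_C q p)
  (Hom0_p : forall a, om0 (inv0 a * a) <= p a ^+ 2).
Variable (om : A -> R[i]).
Hypotheses (Hom_lin : cfunctional om) (Hom_cont : sn_continuous_C qA om)
  (Hom_ext : forall a, om (j a) = om0 a).
Variables (H : lmodType R[i]) (ip : H -> H -> R[i]).
Hypothesis (HH : hilbert_space ip).
Variable (lam : A -> H).
Hypotheses (Hlam_lin : clinear lam)
  (Hlam_dense : dense_in ip (fun a : A0 => lam (j a)))
  (Hlam_ip : forall (x : A) (a : A0), ip (lam x) (lam (j a)) = om (rm (inv0 a) x)).

Lemma nb_dense x (P : A -> Prop) : nb qA x P -> exists a, P (j a).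
Proof.
move=> [n [f [d [d0 Hd]]]].
have := A0_dense HA; move/(_ x n f d d0) => [a ha].
by exists a; apply: Hd.
Qed.

Lemma rm0 b : rm b 0 = 0.
Proof.
have j0 : j 0 = 0 := clin0 (j_lin HA).
by rewrite -j0 (rm_j HA) mulr0.
Qed.

Lemma hnorm_sq (u : H) (e : C) : 0 <= e -> hnorm ip u < e -> ip u u <= e ^+ 2.
Proof.
move=> e0 hu.
have u0 : 0 <= hnorm ip u by rewrite /hnorm sqrtC_ge0 (ip_ge0 HH).
rewrite -[ip u u](sqrtCK (ip u u)) -/(hnorm ip u) !expr2.
by apply: ler_pM => //; apply: ltW.
Qed.

Lemma G_cont c : sn_continuous_C qA (fun y => om (rm (inv0 c) y)).
Proof. exact: (comp_contC (rm_cont HA (inv0 c)) Hom_cont). Qed.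

Lemma lemL : exists n (f : 'I_n -> I) (d : C), 0 < d /\
  forall z, (forall k, qA (f k) z < d) -> ip (lam z) (lam z) <= 8.
Proof.
have [n [f [d [d0 Hd]]]] := Hp_cont 0 ltr01.
exists n, f, (d / 2); split; first by rewrite divr_gt0.
move=> z hz.
have [c hc] := Hlam_dense (lam z) ltr01.
set w := lam z - lam (j c) in hc.
have W1 : ip w w <= 1 by rewrite -(expr1n _ 2); apply: hnorm_sq.
have nbG := G_cont c z ltr01.
have nbB : nb qA z (fun y => forall k, qA (f k) (y - z) < d / 2).
  by exists n, f, (d / 2); split=> //; rewrite divr_gt0.
have [a' [ha1 ha2]] := nb_dense (nb_and nbG nbB).
have qa' : forall k, q (f k) (a' - 0) < d.
  move=> k; rewrite subr0 -(qA_j HA).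
  case: (qA_seminorm HA (f k)) => _ htri _.
  apply: (le_lt_trans (y := qA (f k) (j a' - z) + qA (f k) z)).
    by rewrite -{1}(subrK z (j a')) htri.
  by rewrite [d](splitr d); apply: ltrD.
have pa' := Hd a' qa'.
rewrite (sn0 Hp_sn) subr0 ger0_norm in pa'; last by case: Hp_sn.
set N := ip (lam z) (lam z).
set P := ip (lam (j a')) (lam (j a')).
set W := ip w w.
have P1 : P <= 1.
  rewrite /P Hlam_ip (rm_j HA) Hom_ext.
  apply: (le_trans (Hom0_p a')); apply: exprn_ile1; last exact: ltW.
  by case: Hp_sn.
have lzE : lam z = lam (j c) + w by rewrite /w addrC subrK.
have lcE : lam (j c) = lam z - w by rewrite /w opprB addrC subrK.
set x1 := `|ip (lam (j a')) (lam z)|.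
set x2 := `|ip (lam (j a')) w|.
set x3 := `|ip (lam z) w|.
have h1 : 2 * 2 * x1 <= N + 2 ^+ 2 * P.
  rewrite /x1 (ipC HH) norm_conjC; apply: ip_am => //; exact: ler0n.
have h2 : 2 * 1 * x2 <= P + 1 ^+ 2 * W by apply: ip_am.
have h3 : 2 * 2 * x3 <= N + 2 ^+ 2 * W by apply: ip_am => //; exact: ler0n.
have hN : N <= 1 + x1 + x2 + x3.
  have N0 : 0 <= N by apply: ip_ge0.
  rewrite -(ger0_norm N0) {1}/N {2}lzE (ipDr HH).
  apply: (le_trans (ler_normD _ _)); apply: lerD => //.
  rewrite Hlam_ip.
  set G := fun y => om (rm (inv0 c) y).
  rewrite -/(G z).
  have -> : G z = (G z - G (j a')) + G (j a') by rewrite subrK.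
  apply: (le_trans (ler_normD _ _)); rewrite -addrA.
  apply: lerD; first by rewrite distrC; apply: ltW.
  rewrite /G -Hlam_ip lcE (ipBr HH).
  by apply: (le_trans (ler_normB _ _)).
apply: (arithL _ P1 W1 hN h1 h2 h3).
exact: ip_ge0.
Qed.


Lemma lemK0 (v : H) (e : C) : 0 < e -> exists n (f : 'I_n -> I) (d : C), 0 < d /\
  forall z, (forall k, qA (f k) z < d) -> `|ip (lam z) v| < e.
Proof.
move=> e0.
have [nL [fL [dL [dL0 HL]]]] := lemL.
set e' := e / 9.
have e'0 : 0 < e' by rewrite divr_gt0.
have [c hc] := Hlam_dense v e'0.
set u := v - lam (j c) in hc.
have W1 : ip u u <= e' ^+ 2 by apply: hnorm_sq => //; apply: ltW.
have e20 : 0 < e / 2 by rewrite divr_gt0.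
have nbG := G_cont c 0 e20.
have nbL : nb qA 0 (fun y => forall k, qA (fL k) y < dL).
  by exists nL, fL, dL; split=> // y hy k; have := hy k; rewrite subr0.
have [n [f [d [d0 Hd]]]] := nb_and nbG nbL.
exists n, f, d; split=> // z hz.
have [hG hLz] : `|om (rm (inv0 c) z) - om (rm (inv0 c) 0)| < e / 2 /\
    (forall k, qA (fL k) z < dL).
  by apply: Hd => k; rewrite subr0.
have N8 := HL z hLz.
rewrite rm0 (cfun0 Hom_lin) subr0 in hG.
have vE : v = lam (j c) + u by rewrite /u addrC subrK.
rewrite vE (ipDr HH) Hlam_ip.
apply: (le_lt_trans (ler_normD _ _)).
rewrite [e](splitr e); apply: ltr_leD => //.
rewrite (ipC HH) norm_conjC.
have h := ip_am HH u (lam z) (ltW e'0).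
have h2 : e' * (2 * `|ip u (lam z)|) <= e' * (9 * e').
  rewrite [e' * (2 * _)]mulrA [e' * 2]mulrC; apply: (le_trans h).
  have -> : e' * (9 * e') = e' ^+ 2 + e' ^+ 2 * 8 by ring.
  by apply: lerD => //; apply: ler_wpM2l => //; apply: exprn_ge0; apply: ltW.
rewrite ler_pM2l // in h2.
have -> : e / 2 = (9 * e') / 2 by rewrite /e'; field.
rewrite ler_pdivlMr //.
by rewrite mulrC.
Qed.

Lemma lemKc (v : H) : sn_continuous_C qA (fun x => ip (lam x) v).
Proof.
move=> x e e0.
have [n [f [d [d0 Hd]]]] := lemK0 v e0.
exists n, f, d; split=> // y hy.
by rewrite -(ipBl HH) -(clinB Hlam_lin); apply: Hd.
Qed.

Lemma lemKc' (v : H) : sn_continuous_C qA (fun x => ip v (lam x)).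
Proof.
move=> x e e0.
have [n [f [d [d0 Hd]]]] := lemK0 v e0.
exists n, f, d; split=> // y hy.
by rewrite -(ipBr HH) -(clinB Hlam_lin) (ipC HH) norm_conjC; apply: Hd.
Qed.

Lemma eq_dense (F1 F2 : A -> C) : sn_continuous_C qA F1 -> sn_continuous_C qA F2 ->
  (forall c, F1 (j c) = F2 (j c)) -> forall x, F1 x = F2 x.
Proof.
move=> c1 c2 E x; apply/eqP; rewrite -subr_eq0 -normr_eq0; apply/negP => /negP hd.
have dp : 0 < `|F1 x - F2 x| by rewrite normr_gt0 -normr_eq0.
set D := `|F1 x - F2 x| in dp hd.
have e0 : 0 < D / 2 by rewrite divr_gt0.
have [c [h1 h2]] := nb_dense (nb_and (c1 x _ e0) (c2 x _ e0)).
have : D < D.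
  rewrite {1}/D.
  have -> : F1 x - F2 x = (F1 x - F1 (j c)) + (F2 (j c) - F2 x) by rewrite E addrA subrK.
  rewrite [X in _ < X](splitr D).
  apply: (le_lt_trans (ler_normD _ _)); apply: ltrD => //.
  by rewrite distrC.
by rewrite ltxx.
Qed.

End Main.
Unset Implicit Arguments. Set Strict Implicit.

Theorem proposition10 (R : realType)
  (* the locally convex quasi *-algebra (A, A0) with identity *)
  (A0 : algType R[i]) (inv0 : A0 -> A0) (I : Type) (q : I -> A0 -> R[i])
  (A : lmodType R[i]) (j : A0 -> A) (qA : I -> A -> R[i])
  (invA : A -> A) (lm : A -> A0 -> A) (rm : A0 -> A -> A)
  (HA : lc_quasi_star_algebra inv0 q j qA invA lm rm)
  (* omega0 : positive linear functional on A0 dominated by p^2 *)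
  (om0 : A0 -> R[i]) (Hom0_lin : cfunctional om0)
  (Hom0_pos : forall a, 0 <= om0 (inv0 a * a))
  (p : A0 -> R[i]) (Hp_sn : seminorm p) (Hp_cont : sn_continuous_C q p)
  (Hom0_p : forall a, om0 (inv0 a * a) <= p a ^+ 2)
  (* omega : the continuous extension of omega0 to A *)
  (om : A -> R[i]) (Hom_lin : cfunctional om) (Hom_cont : sn_continuous_C qA om)
  (Hom_ext : forall a, om (j a) = om0 a)
  (* GNS construction of omega *)
  (H : lmodType R[i]) (ip : H -> H -> R[i]) (HH : hilbert_space ip)
  (lam : A -> H) (Hlam_lin : clinear lam)
  (Hlam_dense : dense_in ip (fun a : A0 => lam (j a)))
  (Hlam_ip : forall (x : A) (a : A0), ip (lam x) (lam (j a)) = om (rm (inv0 a) x)) :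
  forall T : H -> H,
    pi_weak_commutant ip j lam invA lm (fun _ => True) T <->
    pi_weak_commutant ip j lam invA lm (fun x => exists a : A0, x = j a) T.
Proof.
move=> T; split.
  move=> [Hb [Ts [Hadj Hx]]]; split=> //; exists Ts; split=> // x _; exact: Hx.
move=> [Hb [Ts [Hadj Hx]]]; split=> //; exists Ts; split=> // x _ a b.
have Kc := lemKc HA Hp_sn Hp_cont Hom0_p Hom_lin Hom_cont Hom_ext HH Hlam_lin Hlam_dense Hlam_ip.
have Kc' := lemKc' HA Hp_sn Hp_cont Hom0_p Hom_lin Hom_cont Hom_ext HH Hlam_lin Hlam_dense Hlam_ip.
pose F1 := fun x => ip (lam (lm x a)) (Ts (lam (j b))).
pose F2 := fun x => ip (T (lam (j a))) (lam (lm (invA x) b)).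
apply: (eq_dense HA (F1 := F1) (F2 := F2)).
- exact: (comp_contC (lm_cont HA a) (Kc _)).
- exact: (comp_contC (comp_cont (invA_cont HA) (lm_cont HA b)) (Kc' _)).
- by move=> c; apply: Hx; exists c.
Qed.
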